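(* Under the first-order dynamical system $$\dot{x}^{(1)}_k=2\lambda(x_{k-1}+s^{*}_{k-1})x^{(1)}_{k-1}-2\lambda(x_k+s^{*}_k)x^{(1)}_k-x^{(1)}_k+x^{(1)}_{k+1},\qquad 1\le k\le b,$$ with $x^{(1)}_0=x^{(1)}_{b+1}\equiv 0$ and initial condition $x^{(1)}(0)=N(z-y)$, we have for all $t\ge 0$ $$|x^{(1)}(t)|\le |x^{(1)}(0)|=1.$$
   Context: Setting: a system of $N$ servers, each with buffer size $b=O(\log N)$, Poisson arrivals of rate $\lambda N$ with $\lambda=1-\gamma/N^{\alpha}$ ($0<\gamma\le 1$, $\alpha>0$), i.i.d. exponential service times of rate one, and the power-of-two-choices dispatching rule. $s_k$ is the fraction of servers with at least $k$ jobs ($s_0=1$, $s_{b+1}=0$), and $s^{*}=(s^*_1,\dots,s^*_b)$ is the unique equilibrium of the mean-field model $\dot s_k=\lambda(s_{k-1}^2-s_k^2)-(s_k-s_{k+1})$ for $1\le k\le b-1$, $\dot s_b=\lambda(s_{b-1}^2-s_b^2)-s_b$. Let $x=s-s^{*}$ and let $x(t)$ denote the trajectory of the centered mean-field dynamics $\dot x=f(x)$ (the mean-field model written in the variable $x=s-s^*$), so that $s_k(t)=x_k(t)+s^*_k\ge 0$ for all $t\ge 0$ and all $k$. The system for $x^{(1)}$ in the claim is the linearization (first-order/variational system) of these dynamics along the trajectory $x(t)$. Here $z,y$ are states such that the transition rate from $z$ to $y$ is nonzero, so $z-y$ has exactly one nonzero entry equal to $\pm 1/N$, hence $x^{(1)}(0)=N(z-y)$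 has a single entry $\pm1$. Throughout, $|v|=\sum_{k=1}^b|v_k|$ denotes the 1-norm. *)

(* Defs.v *)
From Stdlib Require Import Reals Lra.
From Coquelicot Require Import Coquelicot.
Open Scope R_scope.

(* Vectors (x_1, ..., x_b) are represented as functions nat -> R; only the
   indices 1..b are meaningful. *)

(* Extension by zero outside 1..b : enforces x^{(1)}_0 = x^{(1)}_{b+1} = 0. *)
Definition ext (b : nat) (v : nat -> R) (k : nat) : R :=
  if andb (Nat.leb 1 k) (Nat.leb k b) then v k else 0.

Definition sfull (b : nat) (v : nat -> R) (k : nat) : R :=
  if Nat.eqb k 0 then 1 else ext b v k.

Definition mf_field (b : nat) (lam : R) (s : nat -> R) (k : nat) : R :=
  if Nat.ltb k b
  then lam * (s (k - 1)%nat ^ 2 - s k ^ 2) - (s k - s (k + 1)%nat)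
  else lam * (s (k - 1)%nat ^ 2 - s k ^ 2) - s k.

Definition is_equilibrium (b : nat) (lam : R) (s : nat -> R) : Prop :=
  forall k : nat, (1 <= k <= b)%nat -> mf_field b lam (sfull b s) k = 0.

Definition in_state_space (b : nat) (s : nat -> R) : Prop :=
  (forall k : nat, (1 <= k <= b)%nat -> 0 <= s k <= 1) /\
  (forall k : nat, (1 <= k < b)%nat -> s (S k) <= s k).

Fixpoint norm1 (b : nat) (v : nat -> R) : R :=
  match b with
  | O => 0
  | S n => norm1 n v + Rabs (v (S n))
  end.

(* Right-hand side of the first-order (variational) system at index k,
   given the current value x (of the centered mean-field trajectory) and
   the current value y of x^{(1)}. *)
Definition var_field (b : nat) (lam : R) (sstar x y : nat -> R) (k : nat) : R :=
  let S := sfull b (fun j => x j + sstar j) in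
  let Y := ext b y in
  2 * lam * S (k - 1)%nat * Y (k - 1)%nat - 2 * lam * S k * Y k
  - Y k + Y (k + 1)%nat.

(* Main.v *)
Require Import Defs.
From Stdlib Require Import Reals Lra Lia Classical.
From Coquelicot Require Import Coquelicot.
Open Scope R_scope.

Lemma ball_R (c : R) (e : posreal) y : ball c e y <-> Rabs (y - c) < e.
Proof. unfold ball; simpl; unfold AbsRing_ball, abs, minus, plus, opp; simpl. tauto. Qed.

Fixpoint sk (n : nat) (f : nat -> R) : R :=
  match n with O => 0 | S m => sk m f + f (S m) end.

Lemma sk_le n f g : (forall k, (1 <= k <= n)%nat -> f k <= g k) -> sk n f <= sk n g.
Proof.
  induction n; simpl; intros H; [lra|].
  assert (sk n f <= sk n g) by (apply IHn; intros; apply H; lia).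
  assert (f (S n) <= g (S n)) by (apply H; lia). lra.
Qed.

Lemma sk_ext n f g : (forall k, (1 <= k <= n)%nat -> f k = g k) -> sk n f = sk n g.
Proof.
  induction n; simpl; intros H; [lra|].
  rewrite IHn by (intros; apply H; lia). rewrite H by lia. reflexivity.
Qed.

Lemma sk_plus n f g : sk n (fun k => f k + g k) = sk n f + sk n g.
Proof. induction n; simpl; [lra|]. rewrite IHn; ring. Qed.

Lemma sk_scal n c f : sk n (fun k => c * f k) = c * sk n f.
Proof. induction n; simpl; [lra|]. rewrite IHn; ring. Qed.

Lemma sk_const n c : sk n (fun _ => c) = INR n * c.
Proof. induction n; simpl sk; [simpl; lra|]. rewrite IHn, S_INR; ring. Qed.

Lemma sk_tel1 n g : sk n (fun k => g (k - 1)%nat - g k) = g O - g n.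
Proof. induction n; simpl sk; [lra|]. rewrite IHn. replace (S n - 1)%nat with n by lia. try rewrite Nat.sub_0_r. ring. Qed.

Lemma sk_tel2 n g : sk n (fun k => g (k + 1)%nat - g k) = g (n + 1)%nat - g 1%nat.
Proof. induction n; simpl sk; [simpl; lra|]. rewrite IHn.
  replace (S n + 1)%nat with (S (S n)) by lia. replace (n+1)%nat with (S n) by lia. ring. Qed.

Lemma norm1_sk n v : norm1 n v = sk n (fun k => Rabs (v k)).
Proof. induction n; simpl; [lra|]. rewrite IHn; reflexivity. Qed.

Lemma tri3 p q r u v w : 0 <= p -> 0 <= q -> 0 <= r ->
  Rabs (p * u + q * v + r * w) <= p * Rabs u + q * Rabs v + r * Rabs w.
Proof.
  intros. eapply Rle_trans; [apply Rabs_triang|].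
  eapply Rle_trans; [apply Rplus_le_compat_r; apply Rabs_triang|].
  rewrite !Rabs_mult, (Rabs_pos_eq p), (Rabs_pos_eq q), (Rabs_pos_eq r) by lra. lra.
Qed.

Lemma mono (V : R -> R)
  (Hc : forall c, 0 < c -> forall e, 0 < e -> exists d, 0 < d /\
          forall s, Rabs (s - c) < d -> Rabs (V s - V c) < e)
  (Hd : forall c, 0 < c -> forall e, 0 < e -> exists d, 0 < d /\
          forall h, 0 < h < d -> V (c + h) <= V c + e * h)
  t0 t1 : 0 < t0 -> t0 <= t1 -> V t1 <= V t0.
Proof.
  intros Ht0 Ht01.
  assert (key : forall e, 0 < e -> V t1 <= V t0 + e * (t1 - t0)).
  { intros e He.
    set (E := fun s => t0 <= s <= t1 /\ V s <= V t0 + e * (s - t0)).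
    destruct (completeness E) as [c [Hub Hlub]].
    - exists t1. intros s [[_ ?] _]. lra.
    - exists t0. split; [lra|]. replace (t0 - t0) with 0 by ring. lra.
    - assert (Ht0c : t0 <= c).
      { apply Hub. split; [lra|]. replace (t0 - t0) with 0 by ring. lra. }
      assert (Hct1 : c <= t1).
      { apply Hlub. intros s [[_ ?] _]. lra. }
      assert (Wc : V c <= V t0 + e * (c - t0)).
      { destruct (Rle_or_lt (V c) (V t0 + e * (c - t0))) as [|Hlt]; auto. exfalso.
        set (g := V c - (V t0 + e * (c - t0))).
        destruct (Hc c ltac:(lra) (g / 2) ltac:(unfold g; lra)) as [dl [Hdl Hdl']].
        assert (Hex : exists s, E s /\ c - dl < s).
        { apply NNPP. intro Hn.
          assert (c <= c - dl); [|lra].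
          apply Hlub. intros s Es. destruct (Rle_or_lt s (c - dl)); auto.
          exfalso; apply Hn; exists s; auto. }
        destruct Hex as [s [[Hs1 Hs2] Hs3]].
        assert (Hsc : s <= c) by (apply Hub; split; auto).
        assert (Rabs (s - c) < dl) by (rewrite Rabs_left1 by lra; lra).
        specialize (Hdl' s H).
        assert (e * (s - t0) <= e * (c - t0)) by (apply Rmult_le_compat_l; lra).
        revert Hdl'. unfold g. split_Rabs; lra. }
      destruct (Rle_lt_or_eq_dec c t1 Hct1) as [Hlt|Heq].
      + exfalso.
        destruct (Hd c ltac:(lra) e He) as [d [Hd0 Hd1]].
        set (h := Rmin d (t1 - c) / 2).
        assert (Hh1 : 0 < h) by (unfold h; apply Rmin_case; lra).
        assert (Hh2 : h < d) by (unfold h; generalize (Rmin_l d (t1 - c)); lra).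
        assert (Hh3 : h <= t1 - c) by (unfold h; generalize (Rmin_r d (t1 - c)); lra).
        assert (E (c + h)).
        { split; [lra|]. specialize (Hd1 h (conj Hh1 Hh2)).
          replace (e * (c + h - t0)) with (e * (c - t0) + e * h) by ring. lra. }
        apply Hub in H. lra.
      + subst c. exact Wc. }
  destruct (Rle_or_lt (V t1) (V t0)) as [|Hlt]; auto. exfalso.
  set (e := (V t1 - V t0) / (t1 - t0 + 1)).
  assert (He : 0 < e) by (unfold e; apply Rdiv_lt_0_compat; lra).
  assert (Heq : e * (t1 - t0 + 1) = V t1 - V t0) by (unfold e; field; lra).
  specialize (key e He). nra.
Qed.

Lemma mono0 (V : R -> R)
  (Hm : forall t0 t1, 0 < t0 -> t0 <= t1 -> V t1 <= V t0)
  (H0 : forall e, 0 < e -> exists d, 0 < d /\ forall s, 0 < s < d -> Rabs (V s - V 0) < e)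
  t : 0 <= t -> V t <= V 0.
Proof.
  intros Ht. destruct (Rle_lt_or_eq_dec 0 t Ht) as [Hlt|<-]; [|lra].
  destruct (Rle_or_lt (V t) (V 0)) as [|Hb]; auto. exfalso.
  destruct (H0 (V t - V 0) ltac:(lra)) as [d [Hd Hd']].
  set (s := Rmin d t / 2).
  assert (Hs1 : 0 < s) by (unfold s; apply Rmin_case; lra).
  assert (Hs2 : s < d) by (unfold s; generalize (Rmin_l d t); lra).
  assert (Hs3 : s <= t) by (unfold s; generalize (Rmin_r d t); lra).
  specialize (Hd' s (conj Hs1 Hs2)). specialize (Hm s t Hs1 Hs3).
  revert Hd'. split_Rabs; lra.
Qed.

Lemma ineq_aux a b c d e : Rabs (a - b) < e / 2 -> Rabs (c - d) < e / 2 ->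
  Rabs (a + Rabs c - (b + Rabs d)) < e.
Proof. split_Rabs; lra. Qed.

Lemma cont_norm1 {T} (F : (T -> Prop) -> Prop) {FF : Filter F} n (f : T -> nat -> R) g :
  (forall k, (1 <= k <= n)%nat -> filterlim (fun t => f t k) F (locally (g k))) ->
  forall e, 0 < e -> F (fun t => Rabs (norm1 n (f t) - norm1 n g) < e).
Proof.
  induction n; intros Hf e He.
  - apply filter_forall. intros; simpl. rewrite Rminus_0_r, Rabs_R0. lra.
  - assert (A := IHn ltac:(intros; apply Hf; lia) (e/2) ltac:(lra)).
    assert (B := proj1 (@filterlim_locally _ _ F FF _ _) (Hf (S n) ltac:(lia)) (mkposreal (e/2) ltac:(lra))).
    generalize (filter_and _ _ A B). apply filter_imp. intros t [H1 H2].
    apply ball_R in H2. simpl in H2 |- *. apply ineq_aux; auto.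
Qed.

Lemma common_delta n (Q : nat -> R -> Prop) :
  (forall k, (1 <= k <= n)%nat -> exists d, 0 < d /\ forall h, 0 < h < d -> Q k h) ->
  exists d, 0 < d /\ forall h, 0 < h < d -> forall k, (1 <= k <= n)%nat -> Q k h.
Proof.
  induction n; intros H.
  - exists 1; split; [lra|]. intros; lia.
  - destruct IHn as [d1 [Hd1 Hd1']]. { intros; apply H; lia. }
    destruct (H (S n) ltac:(lia)) as [d2 [Hd2 Hd2']].
    exists (Rmin d1 d2); split; [apply Rmin_case; lra|].
    intros h Hh k Hk. generalize (Rmin_l d1 d2) (Rmin_r d1 d2); intros.
    destruct (Nat.eq_dec k (S n)) as [->|]; [apply Hd2'; lra|].
    apply Hd1'; [lra|lia].
Qed.

Lemma ext_in b v k : (1 <= k <= b)%nat -> ext b v k = v k.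
Proof.
  intros Hk. unfold ext. destruct Hk as [H1 H2].
  apply Nat.leb_le in H1, H2. rewrite H1, H2. reflexivity.
Qed.

Lemma ext_out b v : ext b v (b + 1)%nat = 0.
Proof.
  unfold ext. replace (Nat.leb (b + 1) b) with false.
  - destruct (Nat.leb 1 (b+1)); reflexivity.
  - symmetry. apply Nat.leb_gt. lia.
Qed.

Lemma sk_single n j e : (1 <= j)%nat ->
  sk n (fun k => Rabs (if Nat.eqb k j then e else 0)) = if Nat.leb j n then Rabs e else 0.
Proof.
  intros Hj. induction n.
  - simpl. destruct j; [lia|reflexivity].
  - change (sk (S n) (fun k => Rabs (if Nat.eqb k j then e else 0))) with
      (sk n (fun k => Rabs (if Nat.eqb k j then e else 0)) + Rabs (if Nat.eqb (S n) j then e else 0)).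
    rewrite IHn.
    destruct (Nat.eqb_spec (S n) j), (Nat.leb_spec j n), (Nat.leb_spec j (S n)); try lia;
      rewrite ?Rabs_R0; ring.
Qed.

Theorem lemma19
  (N b : nat) (gamma alpha lam : R) (sstar : nat -> R)
  (x x1 : R -> nat -> R)
  (HN : (1 <= N)%nat) (Hb : (1 <= b)%nat)
  (Hgamma : 0 < gamma <= 1) (Halpha : 0 < alpha)
  (Hlam : lam = 1 - gamma / Rpower (INR N) alpha)
  (* s* is the unique equilibrium of the mean-field model *)
  (Hss : in_state_space b sstar)
  (Heq : is_equilibrium b lam sstar)
  (Huniq : forall s : nat -> R, in_state_space b s -> is_equilibrium b lam s ->
           forall k : nat, (1 <= k <= b)%nat -> s k = sstar k)
  (* x(t) solves the centered mean-field dynamics x' = f(x) for t >= 0 *)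
  (Hx_cont0 : forall k : nat, (1 <= k <= b)%nat ->
     filterlim (fun t => x t k) (at_right 0) (locally (x 0 k)))
  (Hx_ode : forall t : R, 0 < t -> forall k : nat, (1 <= k <= b)%nat ->
     is_derive (fun u => x u k) t
       (mf_field b lam (sfull b (fun j => x t j + sstar j)) k))
  (Hx_nonneg : forall t : R, 0 <= t -> forall k : nat, (1 <= k <= b)%nat ->
     0 <= x t k + sstar k)
  (* x^{(1)} solves the first-order system along x(t) for t >= 0 *)
  (Hx1_cont0 : forall k : nat, (1 <= k <= b)%nat ->
     filterlim (fun t => x1 t k) (at_right 0) (locally (x1 0 k)))
  (Hx1_ode : forall t : R, 0 < t -> forall k : nat, (1 <= k <= b)%nat ->
     is_derive (fun u => x1 u k) t (var_field b lam sstar (x t) (x1 t) k))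
  (* x^{(1)}(0) = N (z - y) has exactly one nonzero entry, equal to +-1 *)
  (Hinit : exists (j : nat) (e : R), (1 <= j <= b)%nat /\ (e = 1 \/ e = -1) /\
     forall k : nat, (1 <= k <= b)%nat -> x1 0 k = if Nat.eqb k j then e else 0) :
  forall t : R, 0 <= t -> norm1 b (x1 t) <= norm1 b (x1 0) /\ norm1 b (x1 0) = 1.
Proof.
  intros t Ht.
  assert (Hlam0 : 0 <= lam).
  { assert (HP : 1 <= Rpower (INR N) alpha).
    { unfold Rpower. assert (0 <= ln (INR N)).
      { assert (H1 : 1 <= INR N) by (change 1 with (INR 1); apply le_INR; lia).
        destruct (Rle_lt_or_eq_dec 1 (INR N) H1) as [Hl|He].
        - rewrite <- ln_1. left. apply ln_increasing; lra.
        - rewrite <- He, ln_1. lra. }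
      generalize (exp_ineq1_le (alpha * ln (INR N))). nra. }
    assert (0 < / Rpower (INR N) alpha <= 1).
    { split; [apply Rinv_0_lt_compat; lra|]. rewrite <- Rinv_1.
      apply Rinv_le_contravar; lra. }
    rewrite Hlam. unfold Rdiv. nra. }
  assert (HS : forall t, 0 <= t -> forall j, 0 <= sfull b (fun j => x t j + sstar j) j).
  { intros t' Ht' j. unfold sfull, ext. destruct (Nat.eqb j 0); [lra|].
    destruct (andb (Nat.leb 1 j) (Nat.leb j b)) eqn:E; [|lra].
    apply Bool.andb_true_iff in E. destruct E as [E1 E2].
    apply Nat.leb_le in E1, E2. apply Hx_nonneg; auto. }
  set (V := fun t => norm1 b (x1 t)).
  assert (Hb0 : 0 < INR b) by (apply lt_0_INR; lia).
  assert (Hd : forall c, 0 < c -> forall e, 0 < e -> exists d, 0 < d /\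
          forall h, 0 < h < d -> V (c + h) <= V c + e * h).
  { intros c Hc e He.
    set (e' := e / INR b).
    assert (He' : 0 < e') by (unfold e'; apply Rdiv_lt_0_compat; lra).
    set (S := sfull b (fun j => x c j + sstar j)).
    set (Y := ext b (x1 c)).
    set (a := fun j => 2 * lam * S j).
    set (Fk := fun k => var_field b lam sstar (x c) (x1 c) k).
    assert (Ha : forall j, 0 <= a j).
    { intros j. unfold a. generalize (HS c ltac:(lra) j). fold S. nra. }
    destruct (common_delta b (fun k h => h * (a k + 1) <= 1 /\
       Rabs (x1 (c + h) k - (x1 c k + h * Fk k)) <= e' * h)) as [d [Hd0 Hd1]].
    { intros k Hk.
      generalize (proj1 (is_derive_Reals _ _ _) (Hx1_ode c Hc k Hk) e' He').
      intros [dl Hdl].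
      assert (HA : 0 < a k + 1) by (generalize (Ha k); lra).
      exists (Rmin dl (1 / (a k + 1))). split.
      { apply Rmin_case; [apply cond_pos | apply Rdiv_lt_0_compat; lra]. }
      intros h [Hh1 Hh2].
      generalize (Rmin_l dl (1 / (a k + 1))) (Rmin_r dl (1 / (a k + 1))); intros Hm1 Hm2.
      split.
      - assert (h * (a k + 1) < 1 / (a k + 1) * (a k + 1)) by (apply Rmult_lt_compat_r; lra).
        replace (1 / (a k + 1) * (a k + 1)) with 1 in H by (field; lra). lra.
      - assert (Hh0 : h <> 0) by lra.
        assert (Hha : Rabs h < dl) by (rewrite Rabs_pos_eq; lra).
        specialize (Hdl h Hh0 Hha).
        replace (x1 (c + h) k - (x1 c k + h * Fk k)) with
          (h * ((x1 (c + h) k - x1 c k) / h - var_field b lam sstar (x c) (x1 c) k))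
          by (unfold Fk; field; auto).
        rewrite Rabs_mult, (Rabs_pos_eq h) by lra. nra. }
    exists d. split; auto. intros h Hh. specialize (Hd1 h Hh).
    unfold V. rewrite !norm1_sk.
    apply Rle_trans with (sk b (fun k => Rabs (Y k + h * Fk k) + e' * h)).
    { apply sk_le. intros k Hk. destruct (Hd1 k Hk) as [_ H2].
      unfold Y. rewrite ext_in by auto.
      revert H2. split_Rabs; lra. }
    rewrite sk_plus, sk_const.
    replace (INR b * (e' * h)) with (e * h) by (unfold e'; field; lra).
    apply Rplus_le_compat_r.
    apply Rle_trans with (sk b (fun k => Rabs (Y k) + h * ((a (k - 1)%nat * Rabs (Y (k - 1)%nat)
        - a k * Rabs (Y k)) + (Rabs (Y (k + 1)%nat) - Rabs (Y k))))).
    { apply sk_le. intros k Hk. destruct (Hd1 k Hk) as [H1 _].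
      replace (Y k + h * Fk k) with ((1 - h * a k - h) * Y k + (h * a (k - 1)%nat) * Y (k - 1)%nat
         + h * Y (k + 1)%nat) by (unfold Fk, var_field, a, Y, S; ring).
      eapply Rle_trans; [apply tri3|].
      - nra.
      - generalize (Ha (k - 1)%nat); nra.
      - lra.
      - right; ring. }
    rewrite (sk_plus b (fun k => Rabs (Y k))).
    rewrite (sk_scal b h).
    rewrite (sk_plus b (fun k => a (k - 1)%nat * Rabs (Y (k - 1)%nat) - a k * Rabs (Y k))).
    rewrite (sk_tel1 b (fun j => a j * Rabs (Y j))).
    rewrite (sk_tel2 b (fun j => Rabs (Y j))).
    assert (HY0 : Y O = 0) by reflexivity.
    assert (HYb : Y (b + 1)%nat = 0) by (apply ext_out).
    rewrite HY0, HYb, Rabs_R0.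
    assert (0 <= a b * Rabs (Y b)) by (apply Rmult_le_pos; [apply Ha|apply Rabs_pos]).
    generalize (Rabs_pos (Y 1%nat)). intros.
    assert (sk b (fun k => Rabs (Y k)) = sk b (fun k => Rabs (x1 c k))).
    { apply sk_ext. intros k Hk. unfold Y. rewrite ext_in; auto. }
    nra. }
  assert (Hc : forall c, 0 < c -> forall e, 0 < e -> exists d, 0 < d /\
          forall s, Rabs (s - c) < d -> Rabs (V s - V c) < e).
  { intros c Hc e He.
    assert (Hf : forall k, (1 <= k <= b)%nat ->
              filterlim (fun t => x1 t k) (locally c) (locally (x1 c k))).
    { intros k Hk. apply (ex_derive_continuous (fun u => x1 u k) c).
      eexists. apply Hx1_ode; auto. }
    destruct (cont_norm1 (locally c) b x1 (x1 c) Hf e He) as [eps Heps].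
    exists eps. split; [apply cond_pos|]. intros s Hs. apply Heps. apply ball_R. auto. }
  assert (H0 : forall e, 0 < e -> exists d, 0 < d /\ forall s, 0 < s < d -> Rabs (V s - V 0) < e).
  { intros e He.
    destruct (cont_norm1 (at_right 0) b x1 (x1 0) Hx1_cont0 e He) as [eps Heps].
    exists eps. split; [apply cond_pos|]. intros s [Hs1 Hs2]. apply Heps; [|lra].
    apply ball_R. rewrite Rminus_0_r, Rabs_pos_eq; lra. }
  split.
  - apply (mono0 V); auto. intros t0 t1 H1 H2. apply (mono V Hc Hd); auto.
  - destruct Hinit as [j [e [Hj [He Hk]]]].
    rewrite norm1_sk, (sk_ext _ _ (fun k => Rabs (if Nat.eqb k j then e else 0))).
    + rewrite sk_single by lia. replace (Nat.leb j b) with true by (symmetry; apply Nat.leb_le; lia).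
      destruct He; subst; [apply Rabs_pos_eq; lra | rewrite Rabs_left by lra; ring].
    + intros k Hk'. rewrite Hk; auto.
Qed.
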